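(* Let $R$ be a commutative ring, $n\ge2$, and let $\varphi$ be a $2n\times2n$ alternating matrix over $R$ with Pfaffian $1$. Then ${\rm E}_{2n-1}(R)={\rm E}_\varphi(R)$.
   Context: ${\rm E}_m(R)$ is the subgroup of ${\rm SL}_m(R)$ generated by elementary matrices $I_m+\lambda e_{ij}$ ($i\neq j$, $\lambda\in R$). A square matrix is alternating if it is of the form $\nu-\nu^t$; alternating matrices of Pfaffian $1$ are invertible. Elements of $R^m$ are row vectors, ${}^t$ is transpose. For an invertible alternating $2n\times2n$ matrix $\varphi$ write $\varphi=\begin{pmatrix}0&-c\\ c^t&\nu\end{pmatrix}$, $\varphi^{-1}=\begin{pmatrix}0&d\\ -d^t&\mu\end{pmatrix}$ with $c,d\in R^{2n-1}$, and set $\alpha_\varphi(v)=I_{2n-1}+d^tv\nu$, $\beta_\varphi(v)=I_{2n-1}+\mu v^tc$; ${\rm E}_\varphi(R)$ is the subgroup of ${\rm GL}_{2n-1}(R)$ generated by all $\alpha_\varphi(v),\beta_\varphi(v)$, $v\in R^{2n-1}$. *)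

(* Defs.v *)
From HB Require Import structures.
From mathcomp Require Import all_boot all_order all_algebra all_fingroup.
Set Implicit Arguments. Unset Strict Implicit. Unset Printing Implicit Defensive.
Import GRing.Theory.
Local Open Scope ring_scope.

Section Defs.
Variable R : comNzRingType.

Definition alternating k (A : 'M[R]_k) : Prop := exists nu : 'M[R]_k, A = nu - nu^T.

Definition perm_nat k (s : 'S_k) (a : nat) : nat :=
  if (insub a : option 'I_k) is Some i then nat_of_ord (s i) else a.

Definition mx_nat k (A : 'M[R]_k) (a b : nat) : R :=
  match (insub a : option 'I_k), (insub b : option 'I_k) with
  | Some i, Some j => A i j
  | _, _ => 0
  end.

(* s encodes a perfect matching {s(0),s(1)},{s(2),s(3)},... in canonical form:
   s(2i) < s(2i+1) and s(0) < s(2) < s(4) < ... *)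
Definition pf_perm k (s : 'S_k) : bool :=
  [forall i : 'I_(k./2), perm_nat s (i.*2) < perm_nat s (i.*2).+1]%N &&
  [forall i : 'I_(k./2), (i.+1 < k./2)%N ==> (perm_nat s (i.*2) < perm_nat s (i.*2).+2)%N].

(* Pfaffian (meaningful for k even):
   Pf(A) = sum over perfect matchings of sgn(s) * prod_i a_{s(2i), s(2i+1)} *)
Definition pfaffian k (A : 'M[R]_k) : R :=
  \sum_(s : 'S_k | pf_perm s) (-1) ^+ odd_perm s *
     \prod_(i < k./2) mx_nat A (perm_nat s (i.*2)) (perm_nat s (i.*2).+1).

Inductive gen_group m (S : 'M[R]_m -> Prop) : 'M[R]_m -> Prop :=
| gg_gen A : S A -> gen_group S A
| gg_one : gen_group S 1%:M
| gg_mul A B : gen_group S A -> gen_group S B -> gen_group S (A *m B)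
| gg_inv A B : gen_group S A -> A *m B = 1%:M -> B *m A = 1%:M -> gen_group S B.

Definition elementary m (A : 'M[R]_m) : Prop :=
  exists (i j : 'I_m) (l : R), i != j /\ A = 1%:M + l *: delta_mx i j.

Definition E_group m : 'M[R]_m -> Prop := gen_group (@elementary m).

(* For phi (size 1+m) with inverse psi:
   phi = [[0, -c], [c^t, nu]], psi = [[0, d], [-d^t, mu]] *)
Definition phi_c m (phi : 'M[R]_(1 + m)) : 'rV[R]_m := - ursubmx phi.
Definition phi_nu m (phi : 'M[R]_(1 + m)) : 'M[R]_m := drsubmx phi.
Definition psi_d m (psi : 'M[R]_(1 + m)) : 'rV[R]_m := ursubmx psi.
Definition psi_mu m (psi : 'M[R]_(1 + m)) : 'M[R]_m := drsubmx psi.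

Definition alpha_phi m (phi psi : 'M[R]_(1 + m)) (v : 'rV[R]_m) : 'M[R]_m :=
  1%:M + (psi_d psi)^T *m v *m phi_nu phi.
Definition beta_phi m (phi psi : 'M[R]_(1 + m)) (v : 'rV[R]_m) : 'M[R]_m :=
  1%:M + psi_mu psi *m v^T *m phi_c phi.

Definition E_phi_group m (phi psi : 'M[R]_(1 + m)) : 'M[R]_m -> Prop :=
  gen_group (fun A => exists v : 'rV[R]_m, A = alpha_phi phi psi v \/ A = beta_phi phi psi v).
End Defs.

(* Main.v *)
Require Import Defs.
From HB Require Import structures.
From mathcomp Require Import all_boot all_order all_algebra all_fingroup.
From mathcomp Require Import ring zify.
Import GRing.Theory.
Local Open Scope ring_scope.
Set Implicit Arguments. Unset Strict Implicit. Unset Printing Implicit Defensive.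


Section Alg.
Variable R : comNzRingType.
Variable m : nat.

Definition Tr (u : 'cV[R]_m) (w : 'rV[R]_m) : 'M[R]_m := 1%:M + u *m w.

Lemma Tr0 u : Tr u 0 = 1%:M.
Proof. by rewrite /Tr mulmx0 addr0. Qed.

Lemma TrM x a y b : Tr x a *m Tr y b = 1%:M + x *m a + y *m b + x *m (a *m y) *m b.
Proof.
rewrite /Tr mulmxDl mul1mx [x *m a *m _]mulmxDr mulmx1 !mulmxA.
by rewrite addrA [1%:M + _ + _]addrAC.
Qed.

Lemma TrD_r x a b : a *m x = 0 -> Tr x (a + b) = Tr x a *m Tr x b.
Proof.
by move=> H; rewrite TrM H mulmx0 mul0mx addr0 /Tr mulmxDr addrA.
Qed.

Lemma TrD_c u1 u2 w : w *m u2 = 0 -> Tr (u1 + u2) w = Tr u1 w *m Tr u2 w.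
Proof.
by move=> H; rewrite TrM H mulmx0 mul0mx addr0 /Tr mulmxDl addrA.
Qed.

Lemma Tr_inv1 x w : w *m x = 0 -> Tr x w *m Tr x (- w) = 1%:M.
Proof. by move=> H; rewrite -TrD_r // subrr Tr0. Qed.

Lemma Tr_inv2 x w : w *m x = 0 -> Tr x (- w) *m Tr x w = 1%:M.
Proof. by move=> H; rewrite -TrD_r ?mulNmx ?H ?oppr0 // addNr Tr0. Qed.

Lemma conj_Tr (A B : 'M[R]_m) g w : A *m B = 1%:M ->
  A *m Tr g w *m B = Tr (A *m g) (w *m B).
Proof.
by move=> H; rewrite /Tr mulmxDr mulmx1 mulmxDl H !mulmxA.
Qed.

Lemma Tr_scale a u w : Tr (a *: u) w = Tr u (a *: w).
Proof. by rewrite /Tr -scalemxAl scalemxAr. Qed.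

Section Grp.
Variable S : 'M[R]_m -> Prop.
Local Notation grp := (gen_group S).

Lemma grp_inv_Tr x w : w *m x = 0 -> grp (Tr x w) -> grp (Tr x (- w)).
Proof. by move=> H G; apply: (gg_inv G); [apply: Tr_inv1 | apply: Tr_inv2]. Qed.

Lemma grp_comm u f g w : grp (Tr u f) -> grp (Tr g w) ->
  f *m u = 0 -> w *m g = 0 -> w *m u = 0 ->
  grp (Tr u ((f *m g) 0 0 *: w)).
Proof.
move=> Gf Gw Hfu Hwg Hwu.
pose sg : R := (f *m g) 0 0.
have Hfg : f *m g = sg%:M by rewrite [LHS]mx11_scalar.
have E1 : Tr u f *m Tr g w *m Tr u (- f) = Tr (g + sg *: u) w.
  rewrite conj_Tr; last exact: Tr_inv1.
  have -> : Tr u f *m g = g + sg *: u.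
    by rewrite /Tr mulmxDl mul1mx -mulmxA Hfg mul_mx_scalar.
  by rewrite /Tr mulmxDr mulmx1 !mulmxN mulmxA Hwu mul0mx subr0.
have E2 : Tr (g + sg *: u) w *m Tr g (- w) = Tr (sg *: u) w.
  rewrite addrC TrD_c // -mulmxA Tr_inv1 // mulmx1 //.
rewrite -Tr_scale -E2 -E1.
apply: gg_mul; last exact: grp_inv_Tr.
apply: gg_mul; first exact: gg_mul.
exact: grp_inv_Tr.
Qed.

Lemma grp_sum_r x (I : finType) (F : I -> 'rV[R]_m) :
  (forall i, F i *m x = 0) -> (forall i, grp (Tr x (F i))) ->
  grp (Tr x (\sum_i F i)).
Proof.
move=> H1 H2.
have : (\sum_i F i) *m x = 0 /\ grp (Tr x (\sum_i F i)).
  apply: (big_ind (fun w => w *m x = 0 /\ grp (Tr x w))).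
  - by rewrite mul0mx Tr0; split=> //; apply: gg_one.
  - move=> a b [Ha Ga] [Hb Gb]; rewrite mulmxDl Ha Hb addr0 TrD_r //.
    by split=> //; apply: gg_mul.
  - by move=> i _; split.
by case.
Qed.

Lemma grp_sum_c w (I : finType) (F : I -> 'cV[R]_m) :
  (forall i, w *m F i = 0) -> (forall i, grp (Tr (F i) w)) ->
  grp (Tr (\sum_i F i) w).
Proof.
move=> H1 H2.
have : w *m (\sum_i F i) = 0 /\ grp (Tr (\sum_i F i) w).
  apply: (big_ind (fun u => w *m u = 0 /\ grp (Tr u w))).
  - by rewrite mulmx0 /Tr mul0mx addr0; split=> //; apply: gg_one.
  - move=> a b [Ha Ga] [Hb Gb]; rewrite mulmxDr Ha Hb addr0 TrD_c //.
    by split=> //; apply: gg_mul.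
  - by move=> i _; split.
by case.
Qed.

End Grp.
End Alg.


Section Gen.
Variable R : comNzRingType.
Variable m : nat.
Variables (p : 'cV[R]_m) (q : 'rV[R]_m).
Hypothesis Hqp : q *m p = 1%:M.

Definition Sgen (A : 'M[R]_m) :=
  (exists w, w *m p = 0 /\ A = Tr p w) \/ (exists u, q *m u = 0 /\ A = Tr u q).
Local Notation G := (gen_group Sgen).

Lemma G1 w : w *m p = 0 -> G (Tr p w).
Proof. by move=> H; apply: gg_gen; left; exists w. Qed.

Lemma G2 u : q *m u = 0 -> G (Tr u q).
Proof. by move=> H; apply: gg_gen; right; exists u. Qed.

Lemma G3 u w : q *m u = 0 -> w *m p = 0 -> w *m u = 0 -> G (Tr u w).
Proof.
move=> Hu Hw Hwu; have := grp_comm (G2 Hu) (G1 Hw) Hu Hw Hwu.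
by rewrite Hqp mxE eqxx mulr1n scale1r.
Qed.

Lemma G1' x w : w *m p = 0 -> w *m x = 0 -> G (Tr x w).
Proof.
move=> Hw Hwx.
have -> : x = p *m (q *m x) + (x - p *m (q *m x)) by rewrite addrC subrK.
have H2 : w *m (x - p *m (q *m x)) = 0.
  by rewrite mulmxBr !mulmxA Hw !mul0mx Hwx subr0.
rewrite TrD_c //; apply: gg_mul.
  have -> : Tr (p *m (q *m x)) w = Tr p ((q *m x) *m w) by rewrite /Tr !mulmxA.
  by apply: G1; rewrite -mulmxA Hw mulmx0.
apply: G3 => //.
by rewrite mulmxBr !mulmxA Hqp mul1mx subrr.
Qed.

Lemma G2' u y : q *m u = 0 -> y *m u = 0 -> G (Tr u y).
Proof.
move=> Hu Hyu.
have -> : y = (y *m p) *m q + (y - (y *m p) *m q) by rewrite addrC subrK.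
rewrite TrD_r; last by rewrite -mulmxA Hu mulmx0.
apply: gg_mul.
  have -> : Tr u ((y *m p) *m q) = Tr (u *m (y *m p)) q by rewrite /Tr !mulmxA.
  by apply: G2; rewrite mulmxA Hu mul0mx.
apply: G3 => //.
  by rewrite mulmxBl -(mulmxA (y *m p) q p) Hqp mulmx1 subrr.
by rewrite mulmxBl -(mulmxA (y *m p) q u) Hu mulmx0 Hyu subrr.
Qed.

End Gen.

Section Coord.
Variable R : comNzRingType.
Variable m : nat.

Definition ec (i : 'I_m) : 'cV[R]_m := delta_mx i 0.
Definition er (j : 'I_m) : 'rV[R]_m := delta_mx 0 j.

Lemma erE j (x : 'cV[R]_m) : er j *m x = (x j 0)%:M.
Proof. by rewrite /er -rowE; apply/rowP => k; rewrite !ord1 !mxE eqxx mulr1n. Qed.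

Lemma ecE i (w : 'rV[R]_m) : w *m ec i = (w 0 i)%:M.
Proof. by rewrite /ec -colE; apply/colP => k; rewrite !ord1 !mxE eqxx mulr1n. Qed.

Lemma Tr_elem i j a : Tr (ec i) (a *: er j) = 1%:M + a *: delta_mx i j.
Proof. by rewrite /Tr -scalemxAr mul_delta_mx. Qed.

End Coord.
Arguments ec {R m}.
Arguments er {R m}.

Ltac e11 := apply/matrixP => a b; rewrite !ord1 !mxE /= ?eqxx /=.

Section StepA.
Variable R : comNzRingType.
Variable m : nat.
Variables (p : 'cV[R]_m) (q : 'rV[R]_m).
Hypothesis Hqp : q *m p = 1%:M.
Local Notation G := (gen_group (Sgen p q)).

Lemma stepA i j t r : i != j -> t != i -> t != j ->
  G (Tr (ec i) ((p j 0 * r) *: er j)).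
Proof.
move=> hij hti htj.
have hji : j != i by rewrite eq_sym.
have hit : i != t by rewrite eq_sym.
have hjt : j != t by rewrite eq_sym.
pose f : 'rV[R]_m := p t 0 *: er j - p j 0 *: er t.
pose g : 'cV[R]_m := q 0 t *: p - ec t.
pose w : 'rV[R]_m := (- r) *: (q 0 t *: f - er j).
have Hfp : f *m p = 0.
  rewrite /f mulmxBl -!scalemxAl !erE !scale_scalar_mx mulrC subrr //.
have Hfu : f *m ec i = 0.
  rewrite ecE; apply/matrixP => a b; rewrite !ord1 !mxE /= ?eqxx /=.
  by rewrite (negbTE hij) (negbTE hit) /= !mulr0 subr0.
have Hfg' : f *m g = (p j 0)%:M.
  rewrite /g mulmxBr -scalemxAr Hfp scaler0 sub0r ecE.
  apply/matrixP => a b; rewrite !ord1 !mxE /= ?eqxx /=.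
  rewrite (negbTE htj) /=; ring.
have Hfg : (f *m g) 0 0 = p j 0 by rewrite Hfg' mxE eqxx mulr1n.
have Hwg : w *m g = 0.
  rewrite /w -scalemxAl mulmxBl -scalemxAl Hfg' erE.
  apply/matrixP => a b; rewrite !ord1 !mxE /= ?eqxx /=.
  rewrite (negbTE hjt) /=; ring.
have Hwu : w *m ec i = 0.
  rewrite ecE; apply/matrixP => a b; rewrite !ord1 !mxE /= ?eqxx /=.
  rewrite (negbTE hij) (negbTE hit) /=; ring.
have Hqg : q *m g = 0.
  rewrite /g mulmxBr -scalemxAr Hqp ecE.
  by apply/matrixP => a b; rewrite !ord1 !mxE /= ?eqxx /=; ring.
have Gf : G (Tr (ec i) f) by apply: G1'.
have Gw : G (Tr g w) by apply: G2'.
have := grp_comm Gf Gw Hfu Hwg Hwu; rewrite Hfg => H.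
have -> : (p j 0 * r) *: er j = p j 0 *: w + (p j 0 * r * q 0 t) *: f.
  by rewrite /w /f; apply/rowP => k; rewrite !mxE; ring.
have Hs : (p j 0 *: w) *m ec i = 0 by rewrite -scalemxAl Hwu scaler0.
rewrite TrD_r //.
apply: gg_mul => //; apply: (G1' Hqp).
  by rewrite -scalemxAl Hfp scaler0.
by rewrite -scalemxAl Hfu scaler0.
Qed.

End StepA.

Section Transp.
Variable R : comNzRingType.
Variable m : nat.

Lemma Tr_tr (u : 'cV[R]_m) (w : 'rV[R]_m) : (Tr u w)^T = Tr w^T u^T.
Proof. by rewrite /Tr raddfD /= trmx1 trmx_mul. Qed.

Lemma gen_trmx (S S' : 'M[R]_m -> Prop) : (forall A, S A -> S' A^T) ->
  forall A, gen_group S A -> gen_group S' A^T.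
Proof.
move=> HS A; elim=> {A}.
- by move=> A /HS; apply: gg_gen.
- by rewrite trmx1; apply: gg_one.
- by move=> A B _ GA _ GB; rewrite trmx_mul; apply: gg_mul.
- move=> A B _ GA HAB HBA; apply: (gg_inv GA).
  + by rewrite -trmx_mul HBA trmx1.
  + by rewrite -trmx_mul HAB trmx1.
Qed.

Lemma Sgen_tr (p : 'cV[R]_m) (q : 'rV[R]_m) A : Sgen p q A -> Sgen q^T p^T A^T.
Proof.
case=> [[w [Hw ->]] | [u [Hu ->]]]; rewrite Tr_tr.
  by right; exists w^T; rewrite -trmx_mul Hw trmx0.
by left; exists u^T; rewrite -trmx_mul Hu trmx0.
Qed.

Lemma G_tr (p : 'cV[R]_m) (q : 'rV[R]_m) A :
  gen_group (Sgen q^T p^T) A -> gen_group (Sgen p q) A^T.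
Proof.
move=> H; have := gen_trmx (@Sgen_tr q^T p^T) H.
by rewrite !trmxK.
Qed.

End Transp.

Section StepBC.
Variable R : comNzRingType.
Variable m : nat.
Variables (p : 'cV[R]_m) (q : 'rV[R]_m).
Hypothesis Hqp : q *m p = 1%:M.
Local Notation G := (gen_group (Sgen p q)).

Lemma stepB i j t r : i != j -> t != i -> t != j ->
  G (Tr (ec i) ((q 0 i * r) *: er j)).
Proof.
move=> hij hti htj.
have Hqp' : p^T *m q^T = 1%:M by rewrite -trmx_mul Hqp trmx1.
have := stepA Hqp' r (i:=j) (j:=i) (t:=t); rewrite eq_sym => /(_ hij htj hti).
move/G_tr; rewrite Tr_tr /ec /er !linearZ /= !trmx_delta mxE.
by rewrite -Tr_scale /Tr -scalemxAl.
Qed.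

End StepBC.

Lemma third m (hm : (3 <= m)%N) (i j : 'I_m) : exists t : 'I_m, (t != i) && (t != j).
Proof.
case: (pickP (fun t : 'I_m => (t != i) && (t != j))) => [t Ht | H]; first by exists t.
have Hs : [set: 'I_m] \subset [set i; j].
  apply/subsetP => t _; rewrite !inE; move: (H t) => /=.
  by case: (t == i); case: (t == j).
have := subset_leq_card Hs; rewrite cardsT card_ord cards2 => Hle.
have h2 : (m <= 2)%N by apply: leq_trans Hle _; case: (i != j).
by have := leq_trans hm h2.
Qed.

Section StepC.
Variable R : comNzRingType.
Variable m : nat.
Hypothesis hm : (3 <= m)%N.
Variables (p : 'cV[R]_m) (q : 'rV[R]_m).
Hypothesis Hqp : q *m p = 1%:M.
Local Notation G := (gen_group (Sgen p q)).

Lemma erec0 (i j : 'I_m) : j != i -> er j *m ec i = 0 :> 'M[R]_1.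
Proof. by move=> h; rewrite /er /ec mul_delta_mx_0. Qed.

Lemma elemG i j a : i != j -> G (Tr (ec i) (a *: er j)).
Proof.
move=> hij.
have hji : j != i by rewrite eq_sym.
have Hsum : \sum_s q 0 s * p s 0 = 1.
  by have := congr1 (fun M : 'M[R]_1 => M 0 0) Hqp; rewrite !mxE eqxx mulr1n.
rewrite -[a]mulr1 -Hsum mulr_sumr scaler_suml.
apply: grp_sum_r => s.
  by rewrite -scalemxAl erec0 // scaler0.
have [t /andP [hti htj]] := third hm i j.
case: (eqVneq s j) => [-> | hsj].
  have := stepA Hqp (a * q 0 j) hij hti htj.
  by have -> : p j 0 * (a * q 0 j) = a * (q 0 j * p j 0) by ring.
case: (eqVneq s i) => [-> | hsi].
  have := stepB Hqp (a * p i 0) hij hti htj.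
  by have -> : q 0 i * (a * p i 0) = a * (q 0 i * p i 0) by ring.
have his : i != s by rewrite eq_sym.
have hjs : j != s by rewrite eq_sym.
have [t1 /andP [h1 h2]] := third hm i s.
have [t2 /andP [h3 h4]] := third hm s j.
have Gf := stepA Hqp a his h1 h2.
have Gw := stepB Hqp 1 hsj h3 h4.
have F1 : ((p s 0 * a) *: er s) *m ec i = 0 by rewrite -scalemxAl erec0 // scaler0.
have F2 : ((q 0 s * 1) *: er j) *m ec s = 0 by rewrite -scalemxAl erec0 // scaler0.
have F3 : ((q 0 s * 1) *: er j) *m ec i = 0 by rewrite -scalemxAl erec0 // scaler0.
have := grp_comm Gf Gw F1 F2 F3.
rewrite /er /ec -scalemxAl mul_delta_mx !mxE /= mulr1 scalerA.
by have -> : p s 0 * a * 1 * q 0 s = a * (q 0 s * p s 0) by ring.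
Qed.

End StepC.
Arguments erec0 {R m i j}.

Section Suslin.
Variable R : comNzRingType.
Variable m : nat.
Hypothesis hm : (3 <= m)%N.
Local Notation E := (gen_group (@elementary R m)).

Lemma gen_sub (S S' : 'M[R]_m -> Prop) : (forall A, S A -> gen_group S' A) ->
  forall A, gen_group S A -> gen_group S' A.
Proof.
move=> HS A; elim=> {A}.
- by move=> A /HS.
- exact: gg_one.
- by move=> A B _ GA _ GB; apply: gg_mul.
- by move=> A B _ GA HAB HBA; apply: (gg_inv GA).
Qed.

Lemma col_sum_delta (u : 'cV[R]_m) : u = \sum_k u k 0 *: ec k.
Proof.
apply: trmx_inj; rewrite [LHS]row_sum_delta raddf_sum /=.
by apply: eq_bigr => k _; rewrite linearZ /= /ec trmx_delta mxE.
Qed.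

Lemma Erow s (w : 'rV[R]_m) : w *m ec s = 0 -> E (Tr (ec s) w).
Proof.
move=> Hw.
have Hws : w 0 s = 0.
  by have := congr1 (fun M : 'M[R]_1 => M 0 0) Hw; rewrite ecE !mxE eqxx mulr1n.
rewrite [w]row_sum_delta; apply: grp_sum_r => k.
  case: (eqVneq k s) => [-> | hks]; first by rewrite Hws scale0r mul0mx.
  by rewrite -scalemxAl (erec0 hks) scaler0.
case: (eqVneq k s) => [-> | hks]; first by rewrite Hws scale0r Tr0; apply: gg_one.
apply: gg_gen; exists s, k, (w 0 k); split; first by rewrite eq_sym.
exact: (Tr_elem s k (w 0 k)).
Qed.

Lemma Ecol s (u : 'cV[R]_m) : er s *m u = 0 -> E (Tr u (er s)).
Proof.
move=> Hu.
have Hus : u s 0 = 0.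
  by have := congr1 (fun M : 'M[R]_1 => M 0 0) Hu; rewrite erE !mxE eqxx mulr1n.
rewrite [u]col_sum_delta; apply: grp_sum_c => k.
  case: (eqVneq k s) => [-> | hks]; first by rewrite Hus scale0r mulmx0.
  by rewrite -scalemxAr (erec0 (i:=k)) ?scaler0 // eq_sym.
case: (eqVneq k s) => [-> | hks]; first by rewrite Hus scale0r /Tr mul0mx addr0; apply: gg_one.
rewrite Tr_scale; apply: gg_gen; exists k, s, (u k 0); split => //.
exact: (Tr_elem k s (u k 0)).
Qed.

Lemma std_sub t A : gen_group (Sgen (ec t) (er t)) A -> E A.
Proof.
apply: gen_sub => B [[w [Hw ->]] | [u [Hu ->]]]; first exact: Erow.
exact: Ecol.
Qed.

Lemma E_zero x w t : w *m ec t = 0 -> w *m x = 0 -> E (Tr x w).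
Proof.
move=> H1 H2; apply: (@std_sub t); apply: (@G1' R m (ec t) (er t) _ x w) => //.
by rewrite /er /ec mul_delta_mx; apply/matrixP => a b; rewrite !ord1 !mxE.
Qed.

Lemma suslin_col (x : 'cV[R]_m) z w : z *m x = 1%:M -> w *m x = 0 -> E (Tr x w).
Proof.
move=> Hzx Hwx.
have Hz1 : \sum_l z 0 l * x l 0 = 1.
  by have := congr1 (fun M : 'M[R]_1 => M 0 0) Hzx; rewrite !mxE eqxx mulr1n.
have Hw0 : \sum_k w 0 k * x k 0 = 0.
  by have := congr1 (fun M : 'M[R]_1 => M 0 0) Hwx; rewrite !mxE.
pose om k l : 'rV[R]_m := x l 0 *: er k - x k 0 *: er l.
have Hom : forall k l, om k l *m x = 0.
  by move=> k l; rewrite /om mulmxBl -!scalemxAl !erE !scale_scalar_mx mulrC subrr.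
have -> : w = \sum_k \sum_l (w 0 k * z 0 l) *: om k l.
  rewrite [LHS]row_sum_delta.
  have -> : \sum_k \sum_l (w 0 k * z 0 l) *: om k l
          = \sum_k (w 0 k *: er k) - (\sum_k w 0 k * x k 0) *: z.
    rewrite scaler_suml -sumrB; apply: eq_bigr => k _.
    rewrite /om.
    under eq_bigr do rewrite scalerBr !scalerA.
    rewrite sumrB -!scaler_suml.
    have -> : \sum_l w 0 k * z 0 l * x l 0 = w 0 k.
      by rewrite -[RHS]mulr1 -Hz1 mulr_sumr; apply: eq_bigr => l _; rewrite mulrA.
    congr (_ - _).
    have Hzs := row_sum_delta z.
    rewrite [in RHS]Hzs scaler_sumr; apply: eq_bigr => l _.
    by rewrite scalerA /er mulrAC.
  by rewrite Hw0 scale0r subr0.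
apply: grp_sum_r => k.
  by rewrite mulmx_suml big1 // => l _; rewrite -scalemxAl Hom scaler0.
apply: grp_sum_r => l; first by rewrite -scalemxAl Hom scaler0.
case: (eqVneq k l) => [-> | hkl].
  by rewrite /om subrr scaler0 Tr0; apply: gg_one.
have [t /andP [htk htl]] := third hm k l.
apply: (@E_zero _ _ t); last by rewrite -scalemxAl Hom scaler0.
rewrite -scalemxAl /om mulmxBl -!scalemxAl !erec0 ?scaler0 ?subrr ?scaler0 //; by rewrite eq_sym.
Qed.

Lemma elementary_tr (A : 'M[R]_m) : elementary A -> elementary A^T.
Proof.
case=> i [j [l [hij ->]]]; exists j, i, l; split; first by rewrite eq_sym.
by rewrite raddfD /= trmx1 linearZ /= trmx_delta.
Qed.

Lemma suslin_row (u : 'cV[R]_m) y z : y *m z = 1%:M -> y *m u = 0 -> E (Tr u y).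
Proof.
move=> Hyz Hyu.
have H : E (Tr y^T u^T).
  apply: (@suslin_col _ z^T); first by rewrite -trmx_mul Hyz trmx1.
  by rewrite -trmx_mul Hyu trmx0.
by have := gen_trmx elementary_tr H; rewrite Tr_tr !trmxK.
Qed.

End Suslin.


Section Phi.
Variable R : comNzRingType.
Variable m : nat.
Variables phi psi : 'M[R]_(1 + m).
Hypothesis halt : alternating phi.
Hypothesis hpsi1 : phi *m psi = 1%:M.
Hypothesis hpsi2 : psi *m phi = 1%:M.

Lemma entry_delta k (A : 'M[R]_k) a b : (er a *m A *m ec b) 0 0 = A a b.
Proof. by rewrite ecE /er -rowE !mxE eqxx mulr1n. Qed.

Lemma phi_tr : phi^T = - phi.
Proof. by case: halt => N ->; rewrite raddfB /= trmxK opprB. Qed.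

Lemma phi_diag a : phi a a = 0.
Proof. by case: halt => N ->; rewrite !mxE subrr. Qed.

Lemma psi_tr : psi^T = - psi.
Proof.
have H : (- psi^T) *m phi = 1%:M.
  by rewrite mulNmx -mulmxN -phi_tr -trmx_mul hpsi1 trmx1.
have H2 : psi = - psi^T by rewrite -{1}[psi]mul1mx -H -mulmxA hpsi1 mulmx1.
by rewrite [in RHS]H2 opprK.
Qed.

Lemma alt_form (x : 'rV[R]_(1 + m)) : x *m phi *m x^T = 0.
Proof.
case: halt => N HN.
have H1 : forall M : 'M[R]_1, M^T = M.
  by move=> M; apply/matrixP => i j; rewrite !ord1 mxE.
rewrite HN mulmxBr mulmxBl.
have -> : x *m N^T *m x^T = (x *m N *m x^T)^T.
  by rewrite !trmx_mul trmxK mulmxA.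
by rewrite H1 subrr.
Qed.

Lemma psi_diag a : psi a a = 0.
Proof.
rewrite -entry_delta.
have -> : psi = psi *m phi *m psi by rewrite hpsi2 mul1mx.
have Hc : psi *m ec a = - (er a *m psi)^T.
  by rewrite trmx_mul psi_tr mulNmx opprK /er trmx_delta.
by rewrite -!mulmxA Hc !mulmxA mulmxN alt_form oppr0 mxE.
Qed.

Local Notation p := (psi_d psi)^T.
Local Notation q := (phi_c phi).
Local Notation nu := (phi_nu phi).
Local Notation mu := (psi_mu psi).

Lemma ulphi : ulsubmx phi = 0.
Proof. by apply/matrixP => i j; rewrite !ord1 !mxE phi_diag. Qed.

Lemma ulpsi : ulsubmx psi = 0.
Proof. by apply/matrixP => i j; rewrite !ord1 !mxE psi_diag. Qed.

Lemma dlpsi : dlsubmx psi = - p.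
Proof.
apply/matrixP => i j; rewrite /psi_d !mxE.
have := congr1 (fun M : 'M[R]_(1 + m) => M (rshift 1 i) (lshift m j)) psi_tr.
by rewrite !mxE => ->; rewrite opprK.
Qed.

Lemma Hqp : q *m p = 1%:M.
Proof.
have := hpsi1; rewrite -{1}[phi]submxK -{1}[psi]submxK mulmx_block.
rewrite [1%:M](scalar_mx_block 1 m) => /eq_block_mx [e1 e2 e3 e4].
by move: e1; rewrite ulphi mul0mx add0r dlpsi /phi_c mulmxN mulNmx.
Qed.

Lemma Hqmu : q *m mu = 0.
Proof.
have := hpsi1; rewrite -{1}[phi]submxK -{1}[psi]submxK mulmx_block.
rewrite [1%:M](scalar_mx_block 1 m) => /eq_block_mx [e1 e2 e3 e4].
by move: e2; rewrite ulphi mul0mx add0r /phi_c /psi_mu mulNmx => ->; rewrite oppr0.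
Qed.

Lemma Hnup : nu *m p = 0.
Proof.
have := hpsi1; rewrite -{1}[phi]submxK -{1}[psi]submxK mulmx_block.
rewrite [1%:M](scalar_mx_block 1 m) => /eq_block_mx [e1 e2 e3 e4].
by move: e3; rewrite ulpsi mulmx0 add0r dlpsi /phi_nu mulmxN => /eqP; rewrite oppr_eq0 => /eqP.
Qed.

Lemma Hpq : p *m q + mu *m nu = 1%:M.
Proof.
have := hpsi2; rewrite -{1}[phi]submxK -{1}[psi]submxK mulmx_block.
rewrite [1%:M](scalar_mx_block 1 m) => /eq_block_mx [e1 e2 e3 e4].
by move: e4; rewrite dlpsi /phi_c /psi_mu /phi_nu mulNmx ?mulmxN ?opprK.
Qed.


Lemma Ephi_Gpq A : E_phi_group phi psi A -> gen_group (Sgen p q) A.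
Proof.
apply: gen_sub => B [v [-> | ->]].
  apply: gg_gen; left; exists (v *m nu); split.
    by rewrite -mulmxA Hnup mulmx0.
  by rewrite /alpha_phi /Tr mulmxA.
apply: gg_gen; right; exists (mu *m v^T); split.
  by rewrite mulmxA Hqmu mul0mx.
by rewrite /beta_phi /Tr.
Qed.

Lemma Gpq_Ephi A : gen_group (Sgen p q) A -> E_phi_group phi psi A.
Proof.
apply: gen_sub => B [[w [Hw ->]] | [u [Hu ->]]].
  apply: gg_gen; exists (w *m mu); left.
  have Hw' : w *m mu *m nu = w.
    have := congr1 (mulmx w) Hpq.
    by rewrite mulmxDr mulmx1 !mulmxA Hw mul0mx add0r.
  by rewrite /alpha_phi /Tr -mulmxA Hw'.
apply: gg_gen; exists (nu *m u)^T; right.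
have Hu' : mu *m (nu *m u) = u.
  have := congr1 (fun M => M *m u) Hpq.
  by rewrite mulmxDl mul1mx -!mulmxA Hu mulmx0 add0r.
by rewrite /beta_phi /Tr trmxK Hu'.
Qed.

End Phi.

Unset Implicit Arguments.

Theorem theorem5p1 (R : comNzRingType) (n : nat) (hn : (2 <= n)%N)
  (phi : 'M[R]_(1 + (n.*2).-1))
  (halt : alternating phi) (hpf : pfaffian phi = 1)
  (psi : 'M[R]_(1 + (n.*2).-1))
  (hpsi1 : phi *m psi = 1%:M) (hpsi2 : psi *m phi = 1%:M) :
  forall A : 'M[R]_((n.*2).-1), E_group A <-> E_phi_group phi psi A.
Proof.
have hm : (3 <= (n.*2).-1)%N by lia.
have Hqp0 := Hqp halt hpsi1.
move=> A; split => H.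
  apply: (Gpq_Ephi halt hpsi1 hpsi2).
  apply: (gen_sub _ H) => B [i [j [l [hij ->]]]].
  rewrite -Tr_elem; exact: (elemG hm Hqp0).
have := Ephi_Gpq halt hpsi1 hpsi2 H.
apply: gen_sub => B [[w [Hw ->]] | [u [Hu ->]]].
  exact: (suslin_col hm Hqp0 Hw).
exact: (suslin_row hm Hqp0 Hu).
Qed.
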